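(* Let $q$ be a prime power and let $l,l',k,t$ be positive integers such that $l\mid q+1$, $k\le\frac{q+1}{l}-1$, $t\in[l]$, $l\le\min\{k,l'\}$ and $k+l'\le q+1$. Set $n_I=k+l'$, $k_I=k$, $n_F=kt+l$, $k_F=kt$. Then there exists an access-optimal $(n_I,k_I;n_F,k_F)$ MDS merge-convertible code over $\mathbb{F}_q$, i.e., $t$ initial $[n_I,k_I]_q$ MDS codes and a final $[n_F,k_F]_q$ MDS code.
   Context: All codes are linear over $\mathbb{F}_q$; $[n]=\{1,\dots,n\}$. A $(t,1)_q$ generalized convertible code (merge-convertible when $t>1$) consists of $t$ initial linear codes $\mathcal{C}^{I_1},\dots,\mathcal{C}^{I_t}$, $\mathcal{C}^{I_i}$ an $[n_{I_i},k_{I_i}]_q$ code, a final linear $[n_F,k_F]_q$ code $\mathcal{C}^F$ with $k_F=\sum_i k_{I_i}$, and a linear bijection $\phi:\mathcal{C}^{I_1}\times\cdots\times\mathcal{C}^{I_t}\to\mathcal{C}^F$, together with: for each $i$, a set $\mathcal{U}_i$ of coordinates of $\mathcal{C}^{I_i}$ (unchanged symbols) with an injective assignment of each $u\in\mathcal{U}_i$ to a coordinate of $\mathcal{C}^F$, images of different pairs $(i,u)$ distinct, such that for all $(c_1,\dots,c_t)$ the coordinate of $\phi(c_1,\dots,c_t)$ assigned to $u$ equals the $u$-th coordinate of $c_i$; the set $\mathcal{W}$ of coordinates of $\mathcal{C}^F$ not assigned to any unchanged symbol (written symbols); and for each $i$ a set $\mathcal{R}_i$ of coordinates of $\mathcal{C}^{I_i}$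 (read symbols) such that $\phi(c_1,\dots,c_t)|_{\mathcal{W}}$ is a function of $(c_1|_{\mathcal{R}_1},\dots,c_t|_{\mathcal{R}_t})$. Read access cost $\rho_r=\sum_i|\mathcal{R}_i|$, write access cost $\rho_w=n_F-\sum_i|\mathcal{U}_i|$, access cost $\rho=\rho_r+\rho_w$. An MDS convertible code is one in which all initial and final codes are MDS; it is access-optimal if its access cost is minimal among all MDS convertible codes with the same parameters. *)

(* Defs.v *)
From HB Require Import structures.
From mathcomp Require Import all_boot all_order all_algebra all_field.
Set Implicit Arguments. Unset Strict Implicit. Unset Printing Implicit Defensive.
Import GRing.Theory.
Local Open Scope ring_scope.

Section Codes.
Variable F : finFieldType.

Definition wt n (c : 'rV[F]_n) : nat := #|[set j : 'I_n | c 0 j != 0]|.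

Definition is_MDS n (C : {vspace 'rV[F]_n}) : Prop :=
  (exists2 c, c \in C & (c != 0) /\ wt c = (n - \dim C + 1)%N) /\
  (forall c, c \in C -> c != 0 -> (n - \dim C + 1 <= wt c)%N).

Record conv_code (t nI kI nF kF : nat) := ConvCode {
  cI : 'I_t -> {vspace 'rV[F]_nI};
  cF : {vspace 'rV[F]_nF};
  phi : ('I_t -> 'rV[F]_nI) -> 'rV[F]_nF;
  uns : 'I_t -> {set 'I_nI};                (* unchanged symbols U_i *)
  asg : 'I_t -> 'I_nI -> 'I_nF;             (* assignment of unchanged symbols *)
  rd : 'I_t -> {set 'I_nI}                  (* read symbols R_i *)
}.

Variables (t nI kI nF kF : nat).
Implicit Type C : conv_code t nI kI nF kF.

Definition in_prod C (c : 'I_t -> 'rV[F]_nI) : Prop := forall i, c i \in cI C i.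

Definition written C : {set 'I_nF} :=
  [set j | ~~ [exists i : 'I_t, exists u in uns C i, asg C i u == j]].

Definition is_conv_code C : Prop :=
  (forall i, \dim (cI C i) = kI) /\
      \dim (cF C) = kF /\
      kF = (t * kI)%N /\
      (forall a c c', in_prod C c -> in_prod C c' ->
         phi C (fun i => a *: c i + c' i) = a *: phi C c + phi C c') /\
      (forall c, in_prod C c -> phi C c \in cF C) /\
      (forall c c', in_prod C c -> in_prod C c' -> phi C c = phi C c' -> c = c') /\
      (forall y, y \in cF C -> exists2 c, in_prod C c & phi C c = y) /\
      (forall i j u v, u \in uns C i -> v \in uns C j ->
         asg C i u = asg C j v -> i = j /\ u = v) /\
      (forall c, in_prod C c -> forall i u, u \in uns C i ->
         phi C c 0 (asg C i u) = c i 0 u) /\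
      (forall c c', in_prod C c -> in_prod C c' ->
         (forall i r, r \in rd C i -> c i 0 r = c' i 0 r) ->
         forall w, w \in written C -> phi C c 0 w = phi C c' 0 w).

Definition is_MDS_conv_code C : Prop :=
  is_conv_code C /\ (forall i, is_MDS (cI C i)) /\ is_MDS (cF C).

Definition read_cost C : nat := (\sum_(i < t) #|rd C i|)%N.
Definition write_cost C : nat := (nF - \sum_(i < t) #|uns C i|)%N.
Definition access_cost C : nat := (read_cost C + write_cost C)%N.

Definition access_optimal C : Prop :=
  is_MDS_conv_code C /\
  forall C' : conv_code t nI kI nF kF,
    is_MDS_conv_code C' -> (access_cost C <= access_cost C')%N.

End Codes.

(* Main.v *)
Require Import Defs.
From HB Require Import structures.
From mathcomp Require Import all_boot all_order all_algebra all_field.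
From mathcomp Require Import zify.
From Stdlib Require Import FunctionalExtensionality.
Set Implicit Arguments. Unset Strict Implicit. Unset Printing Implicit Defensive.
Import GRing.Theory.
Lemma subset_card0 (T : finType) (D : {set T}) d :
  d <= #|D| -> exists2 B : {set T}, B \subset D & #|B| = d.
Proof.
elim: d => [|d IH] lt; first by exists set0; rewrite ?sub0set ?cards0.
have [B BD cB] := IH (ltnW lt).
have : #|D :\: B| > 0 by rewrite cardsD (setIidPr BD) cB subn_gt0.
rewrite card_gt0 => /set0Pn [x]; rewrite inE => /andP [xB xD].
exists (x |: B); first by rewrite subUset sub1set xD BD.
by rewrite cardsU1 xB cB.
Qed.

Lemma subset_card (T : finType) (A C : {set T}) m :
  A \subset C -> #|A| <= m -> m <= #|C| ->
  exists B : {set T}, [/\ A \subset B, B \subset C & #|B| = m].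
Proof.
move=> AC Am mC.
have [B0 B0D cB0] : exists2 B0 : {set T}, B0 \subset C :\: A & #|B0| = m - #|A|.
  apply: subset_card0; rewrite cardsD (setIidPr AC); lia.
exists (A :|: B0); split; first exact: subsetUl.
  by rewrite subUset AC (subset_trans B0D) // subsetDl.
rewrite cardsU cB0.
suff -> : A :&: B0 = set0 by rewrite cards0; lia.
apply/setP => x; rewrite !inE; apply/negP => /andP [xA xB].
by move: (subsetP B0D x xB); rewrite inE xA.
Qed.
Lemma wt_compl (F : finFieldType) n (c : 'rV[F]_n) :
  wt c = n - #|[set j | c 0%R j == 0%R]|.
Proof.
rewrite /wt.
have -> : [set j | c 0%R j != 0%R] = ~: [set j | c 0%R j == 0%R].
  by apply/setP => j; rewrite !inE.
by rewrite cardsCs card_ord setCK.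
Qed.

Lemma MDS_zero (F : finFieldType) n (V : {vspace 'rV[F]_n}) (S : {set 'I_n}) c :
  is_MDS V -> c \in V -> (forall j, j \in S -> c 0%R j = 0%R) -> \dim V <= #|S| -> c = 0%R.
Proof.
move=> [_ H] cV cS dS; apply/eqP; apply: contraT => nz.
have := H c cV nz; rewrite wt_compl.
have : #|S| <= #|[set j | c 0%R j == 0%R]|.
  by apply: subset_leq_card; apply/subsetP => j jS; rewrite inE cS.
have : #|[set j | c 0%R j == 0%R]| <= n by apply: leq_trans (max_card _) _; rewrite card_ord.
move=> h1 h2 h3. set Z := #|_| in h1 h2 h3. lia.
Qed.

Lemma MDS_support (F : finFieldType) n (V : {vspace 'rV[F]_n}) (S : {set 'I_n}) c :
  is_MDS V -> c \in V -> c != 0%R -> (forall j, j \in S -> c 0%R j = 0%R) ->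
  #|S| = (\dim V).-1 -> forall j, j \notin S -> c 0%R j != 0%R.
Proof.
move=> [_ H] cV nz cS dS j jS; apply/negP => /eqP cj.
have := H c cV nz; rewrite wt_compl.
have : #|j |: S| <= #|[set j | c 0%R j == 0%R]|.
  apply: subset_leq_card; apply/subsetP => x; rewrite !inE.
  by case/orP => [/eqP -> | xS]; rewrite ?cj ?cS.
have : #|[set j | c 0%R j == 0%R]| <= n by apply: leq_trans (max_card _) _; rewrite card_ord.
rewrite cardsU1 jS dS. move=> h1 h2 h3. set Z := #|[set _ | _]| in h1 h2 h3. lia.
Qed.

Definition maskmx (F : finFieldType) n (S : {set 'I_n}) : 'M[F]_n :=
  diag_mx (\row_j (if j \in S then 1 else 0)%R).

Lemma vanish (F : finFieldType) n (V : {vspace 'rV[F]_n}) (S : {set 'I_n}) :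
  #|S| < \dim V -> exists v, [/\ v \in V, v != 0%R & forall j, j \in S -> v 0%R j = 0%R].
Proof.
move=> lt.
pose f : 'End('rV[F]_n) := linfun (mulmxr (maskmx F S)).
pose X := [seq (delta_mx 0%R j : 'rV[F]_n) | j <- enum S].
have sub : ((f @: V) <= <<X>>)%VS.
  apply/subvP => w /memv_imgP [u _ ->].
  rewrite lfunE /= /maskmx mul_mx_diag.
  rewrite [X in X \in _]row_sum_delta.
  apply: memv_suml => j _.
  rewrite !mxE; case: ifP => jS; last by rewrite mulr0 scale0r mem0v.
  by rewrite mulr1 memvZ // memv_span // map_f // mem_enum.
have d1 : \dim (f @: V) <= #|S|.
  apply: leq_trans (dimvS sub) _; apply: leq_trans (dim_span X) _.
  by rewrite size_map -cardE.
have e := limg_ker_dim f V.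
have : \dim (V :&: lker f) != 0.
  rewrite -lt0n; rewrite -e in lt; move: lt d1.
  set a := \dim (_ :&: _); set b := \dim (_ @: _). lia.
rewrite dimv_eq0 -vpick0 => nz.
have := memv_pick (V :&: lker f); rewrite memv_cap => /andP [vV vK].
exists (vpick (V :&: lker f)); split => // j jS.
move: vK; rewrite memv_ker lfunE /= /maskmx mul_mx_diag => /eqP /rowP /(_ j).
by rewrite !mxE jS mulr1.
Qed.
Lemma zero_entry (F : finFieldType) n (r : 'I_n) : (0 : 'rV[F]_n)%R 0%R r = 0%R.
Proof. by rewrite mxE. Qed.

Lemma phi0 (F : finFieldType) t nI kI nF kF (C : conv_code F t nI kI nF kF) :
  is_conv_code C -> phi C (fun _ => 0%R) = 0%R.
Proof.
move=> [_ [_ [_ [lin _]]]].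
have in0 : in_prod C (fun _ => 0%R) by move=> i; exact: mem0v.
have e := lin 1%R _ _ in0 in0; simpl in e.
rewrite (_ : (fun i : 'I_t => (1 *: (0 : 'rV[F]_nI) + 0)%R) = (fun _ => 0%R)) in e; last first.
  by apply: functional_extensionality => i; rewrite scale1r addr0.
rewrite scale1r in e.
by apply: (addrI (phi C (fun _ => 0%R))); rewrite addr0 -e.
Qed.

Lemma lower (F : finFieldType) t k l l' (C : conv_code F t (k + l') k (k * t + l) (k * t)) :
  (1 < t)%N -> (0 < k)%N -> (l <= k)%N -> is_MDS_conv_code C ->
  (t.+1 * l <= access_cost C)%N.
Proof.
move=> t2 k0 lk [cc [MI MF]].
have p0 := phi0 cc.
move: cc => [dI [dF [_ [lin [mem [inj [surj [asgI [copy wr]]]]]]]]].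
have u_le : forall i, (#|uns C i| <= k)%N.
  move=> i; rewrite leqNgt; apply/negP => ltk.
  have [Z' ZU cZ] := subset_card0 ltk.
  have : (0 < #|Z'|)%N by rewrite cZ.
  rewrite card_gt0 => /set0Pn [z0 z0Z].
  set S0 := Z' :\ z0.
  have cS0 : #|S0| = k by move: (cardsD1 z0 Z'); rewrite z0Z cZ add1n => -[e]; rewrite -e.
  have S0U : S0 \subset uns C i by apply: subset_trans ZU; exact: subD1set.
  have z0U : z0 \in uns C i by apply: (subsetP ZU).
  set T := asg C i @: S0.
  have cT : #|T| = k.
    rewrite card_in_imset ?cS0 // => x y xS yS /= e.
    by case: (asgI i i x y (subsetP S0U x xS) (subsetP S0U y yS) e).
  have TC : T \subset ~: [set asg C i z0].
    apply/subsetP => a /imsetP [x xS ->]; rewrite !inE.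
    apply/eqP => e; case: (asgI i i x z0 (subsetP S0U x xS) z0U e) => _ ex.
    by move: xS; rewrite ex !inE eqxx.
  have [Sf [TS SfC cSf]] : exists Sf : {set 'I_(k * t + l)},
      [/\ T \subset Sf, Sf \subset ~: [set asg C i z0] & #|Sf| = (k * t).-1].
    apply: subset_card => //; rewrite ?cT ?cardsC1 ?card_ord.
      have : (k * 2 <= k * t)%N by rewrite leq_mul2l t2 orbT.
      lia.
    have : (1 <= k * t)%N by rewrite muln_gt0 k0; lia.
    lia.
  have [y [yF ynz yS]] : exists y, [/\ y \in cF C, y != 0%R & forall j, j \in Sf -> y 0%R j = 0%R].
    apply: vanish; rewrite cSf dF.
    have : (1 <= k * t)%N by rewrite muln_gt0 k0; lia.
    lia.
  have ya : y 0%R (asg C i z0) != 0%R.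
    apply: (MDS_support MF yF ynz yS); first by rewrite dF.
    by apply/negP => /(subsetP SfC); rewrite !inE eqxx.
  have [c cP ey] := surj y yF.
  have ci0 : c i = 0%R.
    apply: (MDS_zero (MI i) (cP i) (S := S0)); last by rewrite dI cS0.
    move=> j jS; rewrite -copy //; last exact: (subsetP S0U).
    by rewrite ey yS //; apply: (subsetP TS); apply: imset_f.
  by move: ya; rewrite -ey copy // ci0 mxE eqxx.
have r_ge : forall i, (l <= #|rd C i|)%N.
  move=> i; rewrite leqNgt; apply/negP => rl.
  set U := uns C i :|: rd C i.
  have cU : (#|U| <= #|uns C i| + #|rd C i|)%N by rewrite cardsU; lia.
  have uk := u_le i.
  have [S [rS cS cuS]] : exists S : {set 'I_(k + l')},
      [/\ rd C i \subset S, #|S| = k.-1 & (#|uns C i :\: S| <= l)%N].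
    have [big | small] := leqP k.-1 #|U|.
      have [S [rS SU cS]] := @subset_card _ (rd C i) U k.-1 (subsetUr _ _) ltac:(lia) big.
      exists S; split => //.
      have : (#|uns C i :\: S| <= #|U :\: S|)%N.
        by apply: subset_leq_card; apply: setSD; apply: subsetUl.
      rewrite [#|U :\: S|]cardsD (setIidPr SU) cS; lia.
    have [S [US _ cS]] := @subset_card _ U setT k.-1 (subsetT _) ltac:(lia)
      ltac:(rewrite cardsT card_ord; lia).
    exists S; split => //; first by apply: subset_trans US; apply: subsetUr.
    suff -> : uns C i :\: S = set0 by rewrite cards0.
    apply/setP => x; rewrite !inE; apply/negP => /andP [xS xu].
    by move/negP: xS; apply; apply: (subsetP US); rewrite inE xu.
  have [ci [ciI cinz ciS]] : exists v, [/\ v \in cI C i, v != 0%R & forall j, j \in S -> v 0%R j = 0%R].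
    apply: vanish; rewrite cS dI; lia.
  pose c := fun j : 'I_t => if j == i then ci else 0%R.
  have cP : in_prod C c by move=> j; rewrite /c; case: eqP => [-> //| _]; exact: mem0v.
  have in0 : in_prod C (fun _ => 0%R) by move=> j; exact: mem0v.
  have ynz : phi C c != 0%R.
    apply/negP => /eqP e; rewrite -p0 in e.
    have := inj _ _ cP in0 e => /(congr1 (fun f => f i)); rewrite /c eqxx => ci0.
    by move: cinz; rewrite ci0 eqxx.
  have := proj2 MF _ (mem _ cP) ynz; rewrite dF.
  have : (wt (phi C c) <= #|uns C i :\: S|)%N.
    apply: leq_trans (leq_imset_card (asg C i) _); apply: subset_leq_card.
    apply/subsetP => j; rewrite inE => yj.
    have [jW | jW] := boolP (j \in written C).
      move: yj; rewrite (wr c (fun _ => 0%R) cP in0) // ?p0 ?mxE ?eqxx //.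
      move=> m r rm; rewrite /c; have [em | ne] := eqVneq m i; last by [].
      subst m; rewrite ciS; last exact: (subsetP rS).
      exact: (esym (zero_entry _ _)).
    move: jW; rewrite inE negbK => /existsP [m /existsP [u /andP [um /eqP ej]]].
    move: yj; rewrite -ej copy // /c; case: (m =P i) => [em | _]; last by rewrite mxE eqxx.
    subst m => ciu; apply: imset_f; rewrite inE um andbT.
    by apply/negP => uS; move: ciu; rewrite ciS ?eqxx.
  move=> h1 h2; move: (leq_trans h2 h1) cuS; lia.
rewrite /access_cost /read_cost /write_cost.
have h1 : (t * l <= \sum_(i < t) #|rd C i|)%N.
  rewrite -[t in (t * l)%N]card_ord -sum_nat_const; exact: leq_sum.
have h2 : (\sum_(i < t) #|uns C i| <= t * k)%N.
  rewrite -[t in (t * k)%N]card_ord -sum_nat_const; exact: leq_sum.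
move: h1 h2; set a := \sum_(i < t) _; set b := \sum_(i < t) _.
rewrite mulnC; lia.
Qed.
Local Open Scope ring_scope.

Definition ev (F : finFieldType) (K : nat) (p : {poly F}) (z : option F) : F :=
  if z is Some x then p.[x] else p`_K.-1.

Lemma ev_sum (F : finFieldType) K (I : Type) (r : seq I) (P : pred I) (f : I -> {poly F}) z :
  ev K (\sum_(i <- r | P i) f i)%R z = (\sum_(i <- r | P i) ev K (f i) z)%R.
Proof. by case: z => [x|] /=; rewrite ?horner_sum ?coef_sum. Qed.

Lemma ev_scale (F : finFieldType) K a (p : {poly F}) z : ev K (a *: p)%R z = (a * ev K p z)%R.
Proof. by case: z => [x|] /=; rewrite ?hornerZ ?coefZ. Qed.

Lemma ev_add (F : finFieldType) K (p q : {poly F}) z : ev K (p + q)%R z = (ev K p z + ev K q z)%R.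
Proof. by case: z => [x|] /=; rewrite ?hornerD ?coefD. Qed.

Lemma ev_mul (F : finFieldType) K1 K2 (f g : {poly F}) z :
  (0 < K1)%N -> (0 < K2)%N -> (size f <= K1)%N -> (size g <= K2)%N ->
  ev (K1 + K2)%N.-1 (f * g)%R z = (ev K1 f z * ev K2 g z)%R.
Proof.
move=> K10 K20 sf sg; case: z => [x|] /=; first by rewrite hornerM.
have -> : ((K1 + K2)%N.-1.-1 = K1.-1 + K2.-1)%N by lia.
have hlt : (K1.-1 < (K1.-1 + K2.-1).+1)%N by lia.
rewrite coefM (bigD1 (Ordinal hlt)) //=.
rewrite big1 ?addr0 ?addKn // => j /eqP neq.
case: (ltngtP j K1.-1) => [lt | gt | eq].
- rewrite [g`__]nth_default ?mulr0 //; apply: leq_trans sg _; lia.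
- rewrite [f`__]nth_default ?mul0r //; apply: leq_trans sf _; lia.
- by exfalso; apply: neq; apply: val_inj.
Qed.

Lemma size_le_pred (F : finFieldType) K (p : {poly F}) :
  (size p <= K)%N -> p`_K.-1 = 0%R -> (size p <= K.-1)%N.
Proof.
move=> sp c0; case: (ltngtP (size p) K) => [lt|gt|eq]; first by lia.
  by lia.
have [->|nz] := eqVneq p 0%R; first by rewrite size_poly0.
by move: c0; rewrite -eq -lead_coefE => /eqP; rewrite lead_coef_eq0 (negPf nz).
Qed.

Lemma card_roots (F : finFieldType) (p : {poly F}) :
  p != 0%R -> (#|[set x | root p x]| < size p)%N.
Proof.
move=> nz; rewrite cardE; apply: max_poly_roots => //; last exact: enum_uniq.
by apply/allP => x; rewrite mem_enum inE.
Qed.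

Lemma ev_zeros (F : finFieldType) K (p : {poly F}) :
  p != 0%R -> (size p <= K)%N -> (#|[set z | ev K p z == 0%R]| <= K.-1)%N.
Proof.
move=> nz sp.
have hR := card_roots nz.
have sub : [set z | ev K p z == 0%R] \subset
    (if ev K p None == 0%R then [set None] else set0) :|: (Some @: [set x | root p x]).
  apply/subsetP => -[x|]; rewrite !inE /=.
    by move=> r; rewrite (imset_f Some) ?orbT // inE.
  by move=> ->; rewrite inE eqxx.
apply: leq_trans (subset_leq_card sub) _.
apply: leq_trans (leq_card_setU _ _) _.
rewrite card_imset; last by move=> a b [].
case: ifP => /= [/eqP c0|_]; rewrite ?cards1 ?cards0.
  have := size_le_pred sp c0.
  move=> h; rewrite add1n; exact: leq_trans hR h.
have sp0 : (0 < size p)%N by rewrite size_poly_gt0.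
rewrite add0n -ltnS; apply: leq_trans hR _; lia.
Qed.

Definition polyrv (F : finFieldType) K (m : 'rV[F]_K) : {poly F} := (\sum_(i < K) m 0%R i *: 'X^i)%R.

Lemma coef_polyrv (F : finFieldType) K (m : 'rV[F]_K) (j : 'I_K) : (polyrv m)`_j = m 0 j.
Proof.
rewrite /polyrv coef_sum (bigD1 j) //= coefZ coefXn eqxx mulr1 big1 ?addr0 // => i ne.
by rewrite coefZ coefXn; case: eqP => [e|]; rewrite ?mulr0 //; case/eqP: ne; apply: val_inj.
Qed.

Lemma size_polyrv (F : finFieldType) K (m : 'rV[F]_K) : (size (polyrv m) <= K)%N.
Proof.
rewrite /polyrv; apply: leq_trans (size_sum _ _ _) _.
apply/bigmax_leqP => i _; apply: leq_trans (size_scale_leq _ _) _.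
by rewrite size_polyXn.
Qed.

Definition cw (F : finFieldType) n K (pi : 'I_n -> option F) (w : 'I_n -> F) (p : {poly F}) : 'rV[F]_n :=
  (\row_j (w j * ev K p (pi j)))%R.

Definition gen (F : finFieldType) n K (pi : 'I_n -> option F) (w : 'I_n -> F) : 'M[F]_(K, n) :=
  (\matrix_(i, j) (w j * ev K 'X^i (pi j)))%R.

Definition code (F : finFieldType) n K (pi : 'I_n -> option F) (w : 'I_n -> F) : {vspace 'rV[F]_n} :=
  limg (linfun (mulmxr (gen K pi w))).

Lemma gen_mul (F : finFieldType) n K (pi : 'I_n -> option F) (w : 'I_n -> F) (m : 'rV[F]_K) :
  (m *m gen K pi w)%R = cw K pi w (polyrv m).
Proof.
apply/rowP => j; rewrite !mxE /polyrv ev_sum mulr_sumr.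
by apply: eq_bigr => i _; rewrite mxE ev_scale mulrCA.
Qed.

Lemma polyrv_row (F : finFieldType) K (p : {poly F}) :
  (size p <= K)%N -> polyrv (\row_(i < K) p`_i)%R = p.
Proof.
move=> sp; rewrite /polyrv.
under eq_bigr do rewrite mxE.
rewrite -(poly_def K (fun i => p`_i)); apply/polyP => i; rewrite coef_poly; case: ifP => lt //.
by rewrite nth_default //; apply: leq_trans sp _; rewrite leqNgt lt.
Qed.


Lemma mem_code (F : finFieldType) n K (pi : 'I_n -> option F) (w : 'I_n -> F) (p : {poly F}) :
  (size p <= K)%N -> cw K pi w p \in code K pi w.
Proof.
move=> sp; apply/memv_imgP; exists (\row_(i < K) p`_i)%R; first exact: memvf.
by rewrite lfunE /= gen_mul polyrv_row.
Qed.

Lemma code_mem (F : finFieldType) n K (pi : 'I_n -> option F) (w : 'I_n -> F) c :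
  c \in code K pi w -> exists2 p : {poly F}, (size p <= K)%N & c = cw K pi w p.
Proof.
case/memv_imgP => m _ ->; exists (polyrv m); first exact: size_polyrv.
by rewrite lfunE /= gen_mul.
Qed.

Lemma cw_lin (F : finFieldType) n K (pi : 'I_n -> option F) (w : 'I_n -> F) a (p q : {poly F}) :
  cw K pi w (a *: p + q)%R = (a *: cw K pi w p + cw K pi w q)%R.
Proof.
by apply/rowP => j; rewrite !mxE ev_add ev_scale mulrDr mulrCA.
Qed.

Lemma cw0 (F : finFieldType) n K (pi : 'I_n -> option F) (w : 'I_n -> F) :
  cw K pi w 0%R = 0%R.
Proof. by apply/rowP => j; rewrite !mxE /ev; case: (pi j) => [x|]; rewrite ?horner0 ?coef0 mulr0. Qed.

Lemma ev_opp (F : finFieldType) K (p : {poly F}) z : ev K (- p) z = - ev K p z.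
Proof. by case: z => [x|] /=; rewrite ?hornerN ?coefN. Qed.

Lemma cw_sub (F : finFieldType) n K (pi : 'I_n -> option F) (w : 'I_n -> F) (p q : {poly F}) :
  cw K pi w (p - q) = cw K pi w p - cw K pi w q.
Proof. by apply/rowP => j; rewrite !mxE ev_add ev_opp mulrDr mulrN. Qed.

Lemma cw_zeros (F : finFieldType) n K (pi : 'I_n -> option F) (w : 'I_n -> F) (p : {poly F}) :
  injective pi -> (forall j, w j != 0) -> p != 0 -> (size p <= K)%N ->
  (#|[set j | cw K pi w p 0%R j == 0%R]| <= K.-1)%N.
Proof.
move=> ipi wnz nz sp.
have -> : [set j | cw K pi w p 0%R j == 0%R] = [set j | ev K p (pi j) == 0%R].
  by apply/setP => j; rewrite !inE mxE mulf_eq0 (negPf (wnz j)).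
rewrite -(card_imset _ ipi); apply: leq_trans (ev_zeros nz sp).
apply: subset_leq_card; apply/subsetP => z /imsetP [j]; rewrite !inE => e ->; exact: e.
Qed.

Lemma cw_inj (F : finFieldType) n K (pi : 'I_n -> option F) (w : 'I_n -> F) (p : {poly F}) :
  injective pi -> (forall j, w j != 0) -> (K <= n)%N -> (size p <= K)%N ->
  cw K pi w p = 0 -> p = 0.
Proof.
move=> ipi wnz Kn sp e; apply/eqP; apply: contraT => nz.
have := cw_zeros ipi wnz nz sp.
have -> : [set j | cw K pi w p 0%R j == 0%R] = setT by apply/setP => j; rewrite !inE e mxE eqxx.
rewrite cardsT card_ord.
have : (0 < size p)%N by rewrite size_poly_gt0.
lia.
Qed.

Lemma dim_code (F : finFieldType) n K (pi : 'I_n -> option F) (w : 'I_n -> F) :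
  injective pi -> (forall j, w j != 0) -> (K <= n)%N -> \dim (code K pi w) = K.
Proof.
move=> ipi wnz Kn.
have cc : #|code K pi w| = (#|F| ^ K)%N.
  have -> : #|code K pi w| = #|[set (m *m gen K pi w) | m : 'rV[F]_K]|.
    apply: eq_card => x; rewrite [RHS]inE; apply/idP/imsetP.
      by case/memv_imgP => m _ ->; exists m => //; rewrite lfunE.
    by case=> m _ ->; rewrite -[m *m _](lfunE (mulmxr (gen K pi w))); apply: memv_img; exact: memvf.
  rewrite card_imset; first by rewrite card_mx mul1n.
  move=> m1 m2; rewrite !gen_mul => /eqP; rewrite -subr_eq0 -cw_sub => /eqP e.
  have sz : (size (polyrv m1 - polyrv m2)%R <= K)%N.
    by apply: leq_trans (size_polyD _ _) _; rewrite geq_max size_polyN !size_polyrv.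
  have h := cw_inj ipi wnz Kn sz e.
  apply/rowP => j.
  move/eqP: h; rewrite subr_eq0 => /eqP hh.
  by have := congr1 (fun p : {poly F} => p`_j) hh; rewrite /= !coef_polyrv.
have := card_vspace (code K pi w); rewrite cc => /eqP.
by rewrite eqn_exp2l ?card_finNzRing_gt1 // => /eqP.
Qed.

Lemma MDS_code (F : finFieldType) n K (pi : 'I_n -> option F) (w : 'I_n -> F) :
  injective pi -> (forall j, w j != 0) -> (0 < K)%N -> (K <= n)%N -> is_MDS (code K pi w).
Proof.
move=> ipi wnz K0 Kn; rewrite /is_MDS dim_code //.
have lb : forall c, c \in code K pi w -> c != 0 -> (n - K + 1 <= wt c)%N.
  move=> c /code_mem [p sp ->] cnz.
  have pnz : p != 0 by apply: contraNneq cnz => ->; rewrite cw0.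
  rewrite wt_compl; have := cw_zeros ipi wnz pnz sp.
  set Z := #|_|; lia.
split => //.
have cN : (#|[set j | pi j == None]| <= 1)%N.
  rewrite -(card_imset _ ipi); apply: leq_trans (_ : #|[set None : option F]| <= 1)%N; last by rewrite cards1.
  by apply: subset_leq_card; apply/subsetP => z /imsetP [j]; rewrite !inE => /eqP e ->; rewrite e.
set Fin := [set j | pi j != None].
have cFin : (K.-1 <= #|Fin|)%N.
  have : #|Fin| + #|[set j | pi j == None]| = n.
    have h := cardsC Fin; rewrite card_ord in h.
    apply: etrans _ h; congr (_ + _).
    by apply: eq_card => j; rewrite !inE negbK.
  lia.
have [S SF cS] := subset_card0 cFin.
pose p0 : {poly F} := \prod_(j in S) ('X - (odflt 0 (pi j))%:P).
have p0m : p0 \is monic by apply: monic_prod_XsubC.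
have sp0 : size p0 = K.
  rewrite /p0 size_prod; last by move=> j _; rewrite polyXsubC_eq0.
  under eq_bigr do rewrite size_XsubC.
  rewrite sum_nat_const cS; lia.
have c0 : cw K pi w p0 \in code K pi w by apply: mem_code; rewrite sp0.
have cnz : cw K pi w p0 != 0.
  apply/eqP => e; have := cw_inj ipi wnz Kn (eq_leq sp0) e => p00.
  by move: p0m; rewrite p00 monicE lead_coef0 eq_sym oner_eq0.
exists (cw K pi w p0) => //; split => //.
apply/eqP; rewrite eqn_leq lb // andbT wt_compl.
have : (#|S| <= #|[set j | cw K pi w p0 0%R j == 0%R]|)%N.
  apply: subset_leq_card; apply/subsetP => j jS; rewrite inE mxE.
  have := subsetP SF j jS; rewrite inE.
  case e : (pi j) => [x|] // _; rewrite /= /p0 horner_prod (bigD1 j) //= e /=.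
  by rewrite hornerXsubC subrr mul0r mulr0.
rewrite cS; set Z := #|_|; lia.
Qed.

Definition xp (F : finFieldType) (p : nat) : F := nth 0 (enum F) p.-1.
Definition pos (F : finFieldType) (p : nat) : option F := if p is 0%N then None else Some (xp F p).

Lemma pos_some (F : finFieldType) p : (0 < p)%N -> pos F p = Some (xp F p).
Proof. by case: p. Qed.

Lemma xp_inj (F : finFieldType) p1 p2 : (0 < p1 <= #|F|)%N -> (0 < p2 <= #|F|)%N ->
  xp F p1 = xp F p2 -> p1 = p2.
Proof.
move=> h1 h2; rewrite /xp => /eqP.
have s1 : (p1.-1 < size (enum F))%N.
  by rewrite -cardT; case/andP: h1 => a b; apply: leq_trans b; rewrite ltn_predL.
have s2 : (p2.-1 < size (enum F))%N.
  by rewrite -cardT; case/andP: h2 => a b; apply: leq_trans b; rewrite ltn_predL.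
rewrite (nth_uniq _ s1 s2 (enum_uniq F)) => /eqP.
case/andP: h1 => a _; case/andP: h2 => b _; lia.
Qed.

Lemma pos_inj (F : finFieldType) p1 p2 : (p1 <= #|F|)%N -> (p2 <= #|F|)%N ->
  pos F p1 = pos F p2 -> p1 = p2.
Proof.
case: p1 => [|p1]; case: p2 => [|p2] //= h1 h2 [] e.
by apply: (xp_inj (F := F)) => //; lia.
Qed.

Definition sigma (l k i j : nat) : nat :=
  if (l <= j < l + k)%N then (j + i * k)%N
  else if (l + i * k <= j < l + i * k + k)%N then (j - i * k)%N else j.

Lemma sigma_inv l k i j : sigma l k i (sigma l k i j) = j.
Proof.
have : (i * k == 0)%N || (k <= i * k)%N.
  case: i => [|i]; first by rewrite mul0n.
  by rewrite mulSn leq_addr orbT.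
rewrite /sigma; set ik := (i * k)%N.
do ! case: ifP; lia.
Qed.

Lemma sigma_inj l k i j1 j2 : sigma l k i j1 = sigma l k i j2 -> j1 = j2.
Proof. by move=> e; rewrite -(sigma_inv l k i j1) e sigma_inv. Qed.

Lemma sigma_lt l k i j N : (j < N)%N -> (l + k + i * k <= N)%N -> (sigma l k i j < N)%N.
Proof. by rewrite /sigma; do ! case: ifP; lia. Qed.

Lemma blk_uniq k i m a b : (a < k)%N -> (b < k)%N -> (i * k + a = m * k + b)%N -> i = m /\ a = b.
Proof.
move=> ak bk e.
have k0 : (0 < k)%N by lia.
have := congr1 (divn^~ k) e; have := congr1 (modn^~ k) e.
by rewrite /= !modnMDl !divnMDl // !modn_small // !divn_small // !addn0 => -> ->.
Qed.

Definition xA (F : finFieldType) l k (i a : nat) : F := xp F (l + i * k + a).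

Definition Apoly (F : finFieldType) l k (i : nat) : {poly F} :=
  \prod_(a < k) ('X - (xA F l k i a)%:P).

Definition Rp (F : finFieldType) l k t (i : 'I_t) : {poly F} :=
  \prod_(m < t | m != i) Apoly F l k m.

Lemma xA_inj (F : finFieldType) l k t i m a b :
  (0 < l)%N -> (k * t + l <= #|F|.+1)%N -> (i < t)%N -> (m < t)%N -> (a < k)%N -> (b < k)%N ->
  xA F l k i a = xA F l k m b -> i = m /\ a = b.
Proof.
move=> l0 N it mt ak bk e.
have hi : (i * k + a < k * t)%N.
  apply: (@leq_trans (i * k + k)); first by rewrite ltn_add2l.
  by rewrite addnC -mulSn mulnC leq_mul2l it orbT.
have hm : (m * k + b < k * t)%N.
  apply: (@leq_trans (m * k + k)); first by rewrite ltn_add2l.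
  by rewrite addnC -mulSn mulnC leq_mul2l mt orbT.
have := xp_inj _ _ e; rewrite -!addnA => h.
have {h} h : (l + (i * k + a) = l + (m * k + b))%N by apply: h; lia.
by apply: blk_uniq ak bk _; lia.
Qed.

Lemma Rp_root (F : finFieldType) l k t (i m : 'I_t) a :
  m != i -> (a < k)%N -> (Rp F l k i).[xA F l k m a] = 0.
Proof.
move=> ne ak; rewrite /Rp horner_prod (bigD1 m) //= /Apoly horner_prod.
by rewrite (bigD1 (Ordinal ak)) //= hornerXsubC subrr !mul0r.
Qed.

Lemma Rp_nz (F : finFieldType) l k t (i : 'I_t) a :
  (0 < l)%N -> (k * t + l <= #|F|.+1)%N -> (a < k)%N -> (Rp F l k i).[xA F l k i a] != 0.
Proof.
move=> l0 N ak; rewrite /Rp horner_prod; apply/prodf_neq0 => m ne.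
rewrite /Apoly horner_prod; apply/prodf_neq0 => b _.
rewrite hornerXsubC subr_eq0; apply/eqP => e.
have [] := xA_inj l0 N (ltn_ord i) (ltn_ord m) ak (ltn_ord b) e => em _.
by move: ne; rewrite -(inj_eq val_inj) /= em eqxx.
Qed.

Lemma Rp_monic (F : finFieldType) l k t (i : 'I_t) : Rp F l k i \is monic.
Proof. by apply: monic_prod => m _; apply: monic_prod_XsubC. Qed.

Lemma size_Rp (F : finFieldType) l k t (i : 'I_t) : size (Rp F l k i) = (k * t.-1).+1.
Proof.
rewrite /Rp size_prod; last by move=> m _; apply: monic_neq0; apply: monic_prod_XsubC.
have -> : \sum_(m < t | m != i) size (Apoly F l k m) = \sum_(m < t | m != i) k.+1.
  by apply: eq_bigr => m _; rewrite /Apoly size_prod_XsubC /index_enum -enumT -cardT card_ord.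
rewrite sum_nat_const cardC1 card_ord; set s := t.-1.
have -> : (s * k.+1 = s * k + s)%N by rewrite mulnS addnC.
rewrite mulnC; lia.
Qed.

Definition piI (F : finFieldType) l k l' (i : nat) (j : 'I_(k + l')) : option F := pos F (sigma l k i j).
Definition wI (F : finFieldType) l k l' t (i : 'I_t) (j : 'I_(k + l')) : F :=
  if (l <= j < l + k)%N then (Rp F l k i).[xA F l k i (j - l)] else 1.
Definition cIc (F : finFieldType) l k l' t (i : 'I_t) : {vspace 'rV[F]_(k + l')} :=
  code k (@piI F l k l' i) (@wI F l k l' t i).
Definition piF (F : finFieldType) n (j : 'I_n) : option F := pos F j.
Definition cFc (F : finFieldType) l k t : {vspace 'rV[F]_(k * t + l)} :=
  code (k * t) (@piF F (k * t + l)) (fun _ => 1).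
Definition phiC (F : finFieldType) l k l' t (d0 : 'I_t) (dI : 'I_(k + l'))
  (c : 'I_t -> 'rV[F]_(k + l')) : 'rV[F]_(k * t + l) :=
  \row_(j < k * t + l) (if (j < l)%N then \sum_(i < t) ev (k * t.-1).+1 (Rp F l k i) (pos F j) * c i 0 (insubd dI j)
          else c (insubd d0 ((j - l) %/ k)%N) 0 (insubd dI (l + (j - l) %% k)%N)).

Lemma piI_inj (F : finFieldType) l k l' t (i : 'I_t) :
  (k + l' <= #|F|.+1)%N -> (k * t + l <= #|F|.+1)%N -> injective (@piI F l k l' i).
Proof.
move=> h1 h2 j1 j2; rewrite /piI => e.
have hi : (l + k + i * k <= #|F|.+1)%N.
  apply: leq_trans h2; rewrite -addnA addnC leq_add2r -mulSn mulnC leq_mul2l ltn_ord orbT //.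
apply: val_inj; apply: (@sigma_inj l k i); apply: (pos_inj (F := F)) e.
  by rewrite -ltnS; apply: sigma_lt => //; apply: leq_trans (ltn_ord _) h1.
by rewrite -ltnS; apply: sigma_lt => //; apply: leq_trans (ltn_ord _) h1.
Qed.

Lemma piF_inj (F : finFieldType) n : (n <= #|F|.+1)%N -> injective (@piF F n).
Proof.
move=> h j1 j2; rewrite /piF => e; apply: val_inj; apply: (pos_inj (F := F)) e.
  by rewrite -ltnS; apply: leq_trans (ltn_ord _) h.
by rewrite -ltnS; apply: leq_trans (ltn_ord _) h.
Qed.

Lemma wI_nz (F : finFieldType) l k l' t (i : 'I_t) j :
  (0 < l)%N -> (k * t + l <= #|F|.+1)%N -> @wI F l k l' t i j != 0.
Proof.
move=> l0 h; rewrite /wI; case: ifP => [/andP [a b] | _]; last exact: oner_neq0.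
apply: Rp_nz => //; lia.
Qed.

Lemma ev_mulK (F : finFieldType) K K1 K2 (f g : {poly F}) z :
  K = (K1 + K2).-1 -> (0 < K1)%N -> (0 < K2)%N -> (size f <= K1)%N -> (size g <= K2)%N ->
  ev K (f * g) z = ev K1 f z * ev K2 g z.
Proof. by move=> ->; apply: ev_mul. Qed.

Lemma phi_cw (F : finFieldType) l k l' t (d0 : 'I_t) (dI : 'I_(k + l')) (p : 'I_t -> {poly F}) :
  (0 < k)%N -> (0 < l)%N -> (0 < t)%N -> (l <= l')%N ->
  (forall i, size (p i) <= k)%N ->
  @phiC F l k l' t d0 dI (fun i => cw k (@piI F l k l' i) (@wI F l k l' t i) (p i)) =
  cw (k * t) (@piF F (k * t + l)) (fun _ => 1) (\sum_(i < t) p i * Rp F l k i).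
Proof.
move=> k0 l0 t0 ll' sp; apply/rowP => j; rewrite !mxE mul1r ev_sum.
case: ifP => jl.
  apply: eq_bigr => i _; rewrite mxE.
  have vj : val (insubd dI j) = j by rewrite val_insubd; case: ifP => //; lia.
  rewrite /wI /piI vj.
  have -> : (l <= j < l + k)%N = false by lia.
  have -> : sigma l k i j = j by rewrite /sigma; do ! case: ifP; lia.
  rewrite mul1r mulrC /piF; apply: esym; apply: ev_mulK => //.
  - have : (k * t = k * t.-1 + k)%N by rewrite -mulnSr (ltn_predK t0).
    lia.
  - by rewrite size_Rp.
set i0 := insubd d0 ((j - l) %/ k)%N.
set a := ((j - l) %% k)%N.
have ak : (a < k)%N by rewrite ltn_mod.
have vi0 : val i0 = ((j - l) %/ k)%N.
  rewrite val_insubd ltn_divLR //; case: ifP => //.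
  by move/negbT; rewrite -leqNgt mulnC; have := ltn_ord j; lia.
have ej : (nat_of_ord j = l + i0 * k + a)%N.
  by rewrite vi0 -addnA -divn_eq; lia.
have va : val (insubd dI (l + a)%N) = (l + a)%N by rewrite val_insubd; case: ifP => //; lia.
rewrite /wI /piI va.
have -> : (l <= l + a < l + k)%N by lia.
have -> : sigma l k i0 (l + a) = (l + i0 * k + a)%N by rewrite /sigma; case: ifP; lia.
have -> : (l + a - l)%N = a by lia.
have j0 : (0 < j)%N by lia.
rewrite /piF ej !pos_some /=; try lia.
rewrite -/(xA F l k i0 a) (bigD1 i0) //= big1 ?addr0; first by rewrite hornerM mulrC.
by move=> i ne; rewrite hornerM (@Rp_root F l k t i i0 a) ?mulr0 // eq_sym.
Qed.

Lemma card_interval n a b : (b <= n)%N -> #|[set j : 'I_n | (a <= j < b)%N]| = (b - a)%N.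
Proof.
move=> bn.
have cl : forall m, (m <= n)%N -> #|[set j : 'I_n | (j < m)%N]| = m.
  move=> m mn; rewrite -[RHS](card_ord m) -(@card_imset _ _ (widen_ord mn) _ (fun x y e => val_inj (congr1 val e : val x = val y))).
  apply: eq_card => j; rewrite !inE; apply/idP/imsetP => [jm | [x _ ->]] //=.
  by exists (Ordinal jm) => //; apply: val_inj.
have [ab | ba] := leqP a b; last first.
  suff -> : [set j : 'I_n | (a <= j < b)%N] = set0 by rewrite cards0; lia.
  by apply/setP => j; rewrite !inE; apply/negP => /andP [h1 h2]; lia.
have e : [set j : 'I_n | (a <= j < b)%N] = [set j : 'I_n | (j < b)%N] :\: [set j : 'I_n | (j < a)%N].
  by apply/setP => j; rewrite !inE; apply/idP/idP => [/andP [h1 h2] | /andP [h1 h2]]; apply/andP; split; lia.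
have e2 : [set j : 'I_n | (j < b)%N] :&: [set j : 'I_n | (j < a)%N] = [set j : 'I_n | (j < a)%N].
  by apply/setP => j; rewrite !inE; apply/idP/idP => [/andP [h1 h2] | h] //; apply/andP; split; lia.
by rewrite e cardsD e2 !cl //; lia.
Qed.

Lemma gen_inj (F : finFieldType) n K (pi : 'I_n -> option F) (w : 'I_n -> F) :
  injective pi -> (forall j, w j != 0) -> (K <= n)%N -> injective (fun m : 'rV[F]_K => m *m gen K pi w).
Proof.
move=> ipi wnz Kn m1 m2; rewrite /= !gen_mul => /eqP; rewrite -subr_eq0 -cw_sub => /eqP e.
have sz : (size (polyrv m1 - polyrv m2)%R <= K)%N.
  by apply: leq_trans (size_polyD _ _) _; rewrite geq_max size_polyN !size_polyrv.
have h := cw_inj ipi wnz Kn sz e.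
apply/rowP => j.
move/eqP: h; rewrite subr_eq0 => /eqP hh.
by have := congr1 (fun p : {poly F} => p`_j) hh; rewrite /= !coef_polyrv.
Qed.

Lemma phiC_copy (F : finFieldType) l k l' t (d0 : 'I_t) (dI : 'I_(k + l')) (dF : 'I_(k * t + l))
  (c : 'I_t -> 'rV[F]_(k + l')) (i : 'I_t) (j : 'I_(k + l')) :
  (0 < k)%N -> (l <= j < l + k)%N ->
  @phiC F l k l' t d0 dI c 0 (insubd dF (j + i * k)%N) = c i 0 j.
Proof.
move=> k0 /andP [lj jk].
have ilt : (i * k + k <= k * t)%N by rewrite addnC -mulSn mulnC leq_mul2l ltn_ord orbT.
have v : val (insubd dF (j + i * k)%N) = (j + i * k)%N by rewrite val_insubd; case: ifP => //; lia.
rewrite mxE v.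
have -> : (j + i * k < l)%N = false by lia.
have e1 : insubd d0 ((j + i * k - l) %/ k)%N = i.
  apply: val_inj; rewrite val_insubd.
  have -> : ((j + i * k - l) %/ k = i)%N.
    by rewrite (_ : (j + i * k - l = i * k + (j - l))%N); [rewrite divnMDl // divn_small ?addn0 //; lia | lia].
  by rewrite ltn_ord.
have e2 : insubd dI (l + (j + i * k - l) %% k)%N = j.
  apply: val_inj; rewrite val_insubd.
  have -> : ((j + i * k - l) %% k = j - l)%N.
    by rewrite (_ : (j + i * k - l = i * k + (j - l))%N); [rewrite modnMDl modn_small //; lia | lia].
  have -> : (l + (j - l) = j)%N by lia.
  by rewrite ltn_ord.
by rewrite e1 e2.
Qed.



Lemma cIc_dim (F : finFieldType) l k l' t (i : 'I_t) :
  (0 < l)%N -> (k + l' <= #|F|.+1)%N -> (k * t + l <= #|F|.+1)%N -> \dim (@cIc F l k l' t i) = k.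
Proof. by move=> *; apply: dim_code; [apply: piI_inj | move=> j; apply: wI_nz | apply: leq_addr]. Qed.

Lemma cIc_MDS (F : finFieldType) l k l' t (i : 'I_t) :
  (0 < k)%N -> (0 < l)%N -> (k + l' <= #|F|.+1)%N -> (k * t + l <= #|F|.+1)%N -> is_MDS (@cIc F l k l' t i).
Proof. by move=> *; apply: MDS_code; [apply: piI_inj | move=> j; apply: wI_nz | | apply: leq_addr]. Qed.

Lemma cFc_dim (F : finFieldType) l k t :
  (k * t + l <= #|F|.+1)%N -> \dim (@cFc F l k t) = (k * t)%N.
Proof. by move=> *; apply: dim_code; [apply: piF_inj | move=> j; apply: oner_neq0 | apply: leq_addr]. Qed.

Lemma cFc_MDS (F : finFieldType) l k t :
  (0 < k)%N -> (0 < t)%N -> (k * t + l <= #|F|.+1)%N -> is_MDS (@cFc F l k t).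
Proof.
move=> k0 t0 *; apply: MDS_code; [apply: piF_inj | move=> j; apply: oner_neq0 | | apply: leq_addr] => //.
by rewrite muln_gt0 k0.
Qed.

Lemma phiC_lin (F : finFieldType) l k l' t (d0 : 'I_t) (dI : 'I_(k + l')) a
  (c c' : 'I_t -> 'rV[F]_(k + l')) :
  @phiC F l k l' t d0 dI (fun i => a *: c i + c' i) =
  a *: @phiC F l k l' t d0 dI c + @phiC F l k l' t d0 dI c'.
Proof.
apply/rowP => j; rewrite !mxE; case: ifP => _ //.
rewrite mulr_sumr -big_split; apply: eq_bigr => i _.
by rewrite !mxE mulrDr mulrCA.
Qed.

Lemma phiC_cw_ex (F : finFieldType) l k l' t (d0 : 'I_t) (dI : 'I_(k + l'))
  (c : 'I_t -> 'rV[F]_(k + l')) :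
  (forall i, c i \in @cIc F l k l' t i) ->
  exists2 p : 'I_t -> {poly F}, (forall i, size (p i) <= k)%N &
    c = (fun i => cw k (@piI F l k l' i) (@wI F l k l' t i) (p i)).
Proof.
move=> cP.
have [p hp] : exists p : 'I_t -> {poly F}, forall i,
    (size (p i) <= k)%N /\ c i = cw k (@piI F l k l' i) (@wI F l k l' t i) (p i).
  apply: (@fin_all_exists _ (fun _ => {poly F}) (fun i p => (size p <= k)%N /\ c i = cw k (@piI F l k l' i) (@wI F l k l' t i) p)).
  by move=> i; have [p sp e] := code_mem (cP i); exists p.
exists p; first by move=> i; case: (hp i).
by apply: functional_extensionality => i; case: (hp i).
Qed.

Lemma size_sumR (F : finFieldType) (l k t : nat) (p : 'I_t -> {poly F}) :
  (0 < k)%N -> (0 < t)%N -> (forall i, size (p i) <= k)%N ->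
  (size (\sum_(i < t) p i * Rp F l k i)%R <= k * t)%N.
Proof.
move=> k0 t0 sp; apply: leq_trans (size_sum _ _ _) _.
apply/bigmax_leqP => i _; apply: leq_trans (size_polyMleq _ _) _.
rewrite size_Rp.
have : (k * t = k * t.-1 + k)%N by rewrite -mulnSr (ltn_predK t0).
have := sp i; lia.
Qed.

Lemma phiC_mem (F : finFieldType) l k l' t (d0 : 'I_t) (dI : 'I_(k + l'))
  (c : 'I_t -> 'rV[F]_(k + l')) :
  (0 < k)%N -> (0 < l)%N -> (0 < t)%N -> (l <= l')%N ->
  (forall i, c i \in @cIc F l k l' t i) -> @phiC F l k l' t d0 dI c \in @cFc F l k t.
Proof.
move=> k0 l0 t0 ll' cP; have [p sp ->] := phiC_cw_ex d0 dI cP.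
by rewrite phi_cw //; apply: mem_code; apply: size_sumR.
Qed.

Lemma phiC_inj (F : finFieldType) l k l' t (d0 : 'I_t) (dI : 'I_(k + l')) (dF : 'I_(k * t + l))
  (c c' : 'I_t -> 'rV[F]_(k + l')) :
  (0 < k)%N -> (0 < l)%N -> (l <= l')%N -> (k + l' <= #|F|.+1)%N -> (k * t + l <= #|F|.+1)%N ->
  (forall i, c i \in @cIc F l k l' t i) -> (forall i, c' i \in @cIc F l k l' t i) ->
  @phiC F l k l' t d0 dI c = @phiC F l k l' t d0 dI c' -> c = c'.
Proof.
move=> k0 l0 ll' h1 h2 cP cP' e; apply: functional_extensionality => i.
apply/eqP; rewrite -subr_eq0; apply/eqP.
apply: (MDS_zero (cIc_MDS i k0 l0 h1 h2) (rpredB (cP i) (cP' i)) (S := [set j : 'I_(k + l') | (l <= j < l + k)%N])).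
  move=> j; rewrite inE => jb; rewrite !mxE -(phiC_copy d0 dI dF c i k0 jb).
  by rewrite -(phiC_copy d0 dI dF c' i k0 jb) e subrr.
rewrite cIc_dim // card_interval; first by lia.
by rewrite addnC leq_add2l.
Qed.

Lemma phiC_surj (F : finFieldType) l k l' t (d0 : 'I_t) (dI : 'I_(k + l')) (dF : 'I_(k * t + l)) y :
  (0 < k)%N -> (0 < l)%N -> (0 < t)%N -> (l <= l')%N -> (k + l' <= #|F|.+1)%N -> (k * t + l <= #|F|.+1)%N ->
  y \in @cFc F l k t ->
  exists2 c : 'I_t -> 'rV[F]_(k + l'), (forall i, c i \in @cIc F l k l' t i) & @phiC F l k l' t d0 dI c = y.
Proof.
move=> k0 l0 t0 ll' h1 h2 yF.
pose G (i : 'I_t) := gen k (@piI F l k l' i) (@wI F l k l' t i).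
have memG : forall i (m : 'rV[F]_k), m *m G i \in @cIc F l k l' t i.
  move=> i m; rewrite -[_ *m _](lfunE (mulmxr (G i))); apply: memv_img; exact: memvf.
pose Psi (M : 'M[F]_(t, k)) := @phiC F l k l' t d0 dI (fun i => row i M *m G i).
have injPsi : injective Psi.
  move=> M1 M2 e; have := phiC_inj dF k0 l0 ll' h1 h2 (fun i => memG i _) (fun i => memG i _) e.
  move=> ef; apply/row_matrixP => i; have := congr1 (fun f => f i) ef => /= ei.
  apply: (gen_inj _ _ _ ei); [apply: piI_inj | move=> j; apply: wI_nz | apply: leq_addr] => //.
have sub : [set Psi M | M : 'M[F]_(t, k)] \subset [set z | z \in @cFc F l k t].
  by apply/subsetP => z /imsetP [M _ ->]; rewrite inE; apply: phiC_mem.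
have ceq : [set Psi M | M : 'M[F]_(t, k)] = [set z | z \in @cFc F l k t].
  apply/eqP; rewrite eqEcard sub /= card_imset // card_mx.
  have -> : #|[set z | z \in @cFc F l k t]| = #|@cFc F l k t| by apply: eq_card => z; rewrite inE.
  by rewrite card_vspace cFc_dim // mulnC.
have : y \in [set Psi M | M : 'M[F]_(t, k)] by rewrite ceq inE.
case/imsetP => M _ ->; exists (fun i => row i M *m G i) => //.
Qed.

Definition unsC (k l l' t : nat) (i : 'I_t) : {set 'I_(k + l')} :=
  if t == 1%N then [set j : 'I_(k + l') | (j < l + k)%N] else [set j : 'I_(k + l') | (l <= j < l + k)%N].
Definition asgC (k l l' t : nat) (dF : 'I_(k * t + l)) (i : 'I_t) (j : 'I_(k + l')) : 'I_(k * t + l) :=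
  insubd dF (if (j < l)%N then nat_of_ord j else (j + i * k)%N).
Definition rdC (k l l' t : nat) (i : 'I_t) : {set 'I_(k + l')} :=
  if t == 1%N then set0 else [set j : 'I_(k + l') | (j < l)%N].

Definition CC (F : finFieldType) k l l' t (d0 : 'I_t) (dI : 'I_(k + l')) (dF : 'I_(k * t + l)) :
  conv_code F t (k + l') k (k * t + l) (k * t) :=
  @ConvCode F t (k + l') k (k * t + l) (k * t) (fun i => @cIc F l k l' t i) (@cFc F l k t)
    (@phiC F l k l' t d0 dI) (@unsC k l l' t) (@asgC k l l' t dF) (@rdC k l l' t).

Lemma val_asgC (k l l' t : nat) (dF : 'I_(k * t + l)) (i : 'I_t) (j : 'I_(k + l')) :
  (0 < k)%N -> (l <= l')%N -> (j < l + k)%N ->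
  nat_of_ord (@asgC k l l' t dF i j) = (if (j < l)%N then nat_of_ord j else (j + i * k)%N).
Proof.
move=> k0 ll' jk; rewrite val_insubd.
have ilt : (i * k + k <= k * t)%N by rewrite addnC -mulSn mulnC leq_mul2l ltn_ord orbT.
case: ifP => // /negP; case: (j < l)%N; lia.
Qed.

Lemma ord_t1 t (i j : 'I_t) : t = 1%N -> i = j.
Proof. by move=> e; apply: ord_inj; have := ltn_ord i; have := ltn_ord j; lia. Qed.

Lemma asgC_inj (k l l' t : nat) (dF : 'I_(k * t + l)) (i j : 'I_t) u v :
  (0 < k)%N -> (l <= l')%N -> u \in @unsC k l l' t i -> v \in @unsC k l l' t j ->
  @asgC k l l' t dF i u = @asgC k l l' t dF j v -> i = j /\ u = v.
Proof.
move=> k0 ll'; rewrite /unsC; case: eqP => [t1 | t1]; rewrite !inE => hu hv.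
  have eij := ord_t1 i j t1; subst j; move=> e; split => //; move: e.
  move/(congr1 (@nat_of_ord _)); rewrite !val_asgC //.
  have vi : nat_of_ord i = 0%N by have := ltn_ord i; lia.
  rewrite vi mul0n !addn0 => e; apply: ord_inj; move: e; do ! case: ifP; lia.
move/(congr1 (@nat_of_ord _)); rewrite !val_asgC //; try lia.
have -> : (u < l)%N = false by lia.
have -> : (v < l)%N = false by lia.
move=> e.
have [h1 h2] : nat_of_ord i = nat_of_ord j /\ (u - l = v - l)%N by apply: (@blk_uniq k); lia.
by split; apply: ord_inj => //; lia.
Qed.

Lemma ev1 (F : finFieldType) z : ev 1 (1 : {poly F}) z = 1.
Proof. by case: z => [x|] /=; rewrite -polyC1 ?hornerC ?coefC. Qed.

Lemma Rp_t1 (F : finFieldType) l k t (i : 'I_t) : t = 1%N -> Rp F l k i = 1.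
Proof.
move=> t1; rewrite /Rp big_pred0 // => m; by rewrite (ord_t1 m i t1) eqxx.
Qed.

Lemma copyC (F : finFieldType) k l l' t (d0 : 'I_t) (dI : 'I_(k + l')) (dF : 'I_(k * t + l))
  (c : 'I_t -> 'rV[F]_(k + l')) (i : 'I_t) (u : 'I_(k + l')) :
  (0 < k)%N -> (l <= l')%N -> u \in @unsC k l l' t i ->
  @phiC F l k l' t d0 dI c 0 (@asgC k l l' t dF i u) = c i 0 u.
Proof.
move=> k0 ll' uU.
have ul : (u < l + k)%N by move: uU; rewrite /unsC; case: ifP; rewrite inE; lia.
have [lu | ul'] := leqP l u.
  have -> : @asgC k l l' t dF i u = insubd dF (u + i * k)%N.
    by rewrite /asgC; have -> : (u < l)%N = false by lia.
  by apply: phiC_copy => //; lia.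
have t1 : t = 1%N by move: uU; rewrite /unsC; case: eqP => // _; rewrite inE; lia.
have va := val_asgC dF i k0 ll' ul; rewrite ul' in va.
rewrite mxE va ul' (bigD1 i) //= big_pred0; last by move=> m; rewrite (ord_t1 m i t1) eqxx.
have -> : ((k * t.-1).+1 = 1)%N by rewrite t1 muln0.
rewrite addr0 Rp_t1 // ev1 mul1r.
by congr (c i 0 _); apply: ord_inj; rewrite val_insubd; case: ifP => //; lia.
Qed.

Lemma writtenC (F : finFieldType) k l l' t (d0 : 'I_t) (dI : 'I_(k + l')) (dF : 'I_(k * t + l))
  (c c' : 'I_t -> 'rV[F]_(k + l')) :
  (0 < k)%N -> (0 < l)%N -> (l <= l')%N ->
  (forall i r, r \in @rdC k l l' t i -> c i 0 r = c' i 0 r) ->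
  forall w, w \in written (CC F d0 dI dF) ->
  @phiC F l k l' t d0 dI c 0 w = @phiC F l k l' t d0 dI c' 0 w.
Proof.
move=> k0 l0 ll' agree w; rewrite inE /= => /negP nW.
have [wl | lw] := ltnP w l.
  have t1 : t != 1%N.
    apply/eqP => t1; apply: nW; apply/existsP; exists d0; apply/existsP.
    have wk : (w < k + l')%N.
      have := ltn_ord w; have : (k * t = k)%N by rewrite t1 muln1. lia.
    have t1b : (t == 1%N) = true by apply/eqP.
    exists (insubd dI w); rewrite /unsC t1b !inE.
    have vw : nat_of_ord (insubd dI w) = nat_of_ord w by rewrite val_insubd wk.
    rewrite vw; apply/andP; split; first by lia.
    apply/eqP; apply: ord_inj; rewrite val_asgC //; last by rewrite vw; lia.
    by rewrite vw wl.
  rewrite !mxE wl; apply: eq_bigr => i _; congr (_ * _); apply: agree.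
  rewrite /rdC (negPf t1) inE val_insubd; case: ifP => //; lia.
exfalso; apply: nW; apply/existsP.
set i := insubd d0 ((w - l) %/ k)%N; exists i; apply/existsP.
set u := insubd dI (l + (w - l) %% k)%N.
have ak : ((w - l) %% k < k)%N by rewrite ltn_mod.
have vu : nat_of_ord u = (l + (w - l) %% k)%N by rewrite val_insubd; case: ifP => //; lia.
have vi : nat_of_ord i = ((w - l) %/ k)%N.
  rewrite val_insubd ltn_divLR //; case: ifP => //.
  by move/negbT; rewrite -leqNgt mulnC; have := ltn_ord w; lia.
exists u; apply/andP; split.
  by rewrite /unsC; case: ifP; rewrite inE vu; lia.
apply/eqP; apply: ord_inj; rewrite val_asgC //; last by rewrite vu; lia.
rewrite vu vi; have -> : (l + (w - l) %% k < l)%N = false by lia.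
have := divn_eq (w - l) k; lia.
Qed.

Lemma CC_MDS (F : finFieldType) k l l' t (d0 : 'I_t) (dI : 'I_(k + l')) (dF : 'I_(k * t + l)) :
  (0 < k)%N -> (0 < l)%N -> (0 < t)%N -> (l <= l')%N -> (k + l' <= #|F|.+1)%N -> (k * t + l <= #|F|.+1)%N ->
  is_MDS_conv_code (@CC F k l l' t d0 dI dF).
Proof.
move=> k0 l0 t0 ll' h1 h2.
split; last split.
- split; first by move=> i; exact: cIc_dim.
  split; first exact: cFc_dim.
  split; first by rewrite mulnC.
  split; first by move=> a c c' _ _; exact: phiC_lin.
  split; first by move=> c cP; exact: phiC_mem.
  split; first by move=> c c' cP cP' e; exact: (phiC_inj dF k0 l0 ll' h1 h2 cP cP' e).
  split; first by move=> y yF; exact: (phiC_surj d0 dI dF k0 l0 t0 ll' h1 h2 yF).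
  split; first by move=> i j u v hu hv e; exact: (asgC_inj k0 ll' hu hv e).
  split; first by move=> c _ i u hu; exact: (copyC d0 dI dF c k0 ll' hu).
  by move=> c c' _ _ ag w hw; exact: (writtenC k0 l0 ll' ag hw).
- by move=> i; exact: cIc_MDS.
- exact: cFc_MDS.
Qed.

Lemma card_lt n b : (b <= n)%N -> #|[set j : 'I_n | (j < b)%N]| = b.
Proof.
move=> bn; rewrite -[RHS]subn0 -(card_interval 0 bn).
by apply: eq_card => j; rewrite !inE.
Qed.

Lemma CC_cost (F : finFieldType) k l l' t (d0 : 'I_t) (dI : 'I_(k + l')) (dF : 'I_(k * t + l)) :
  (l <= l')%N ->
  access_cost (@CC F k l l' t d0 dI dF) = if t == 1%N then 0%N else (t.+1 * l)%N.
Proof.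
move=> ll'; rewrite /access_cost /read_cost /write_cost /= /rdC /unsC.
have lk : (l + k <= k + l')%N by lia.
case: eqP => t1.
  under eq_bigr do rewrite cards0.
  under [X in (_ - X)%N]eq_bigr do rewrite card_lt //.
  rewrite !sum_nat_const card_ord t1; lia.
have cl : #|[set j : 'I_(k + l') | (j < l)%N]| = l by apply: card_lt; lia.
have ci : #|[set j : 'I_(k + l') | (l <= j < l + k)%N]| = (l + k - l)%N by apply: card_interval.
under eq_bigr do rewrite cl.
under [X in (_ - X)%N]eq_bigr do rewrite ci.
rewrite !sum_nat_const card_ord.
have -> : (l + k - l = k)%N by lia.
rewrite mulnC; lia.
Qed.
Local Close Scope ring_scope.

Theorem mainTheorem6 (q l l' k t : nat) :
  (exists p e, prime p /\ 0 < e /\ q = p ^ e) ->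
  0 < l -> 0 < l' -> 0 < k -> 0 < t ->
  l %| q.+1 ->
  k <= q.+1 %/ l - 1 ->
  t <= l ->
  l <= minn k l' ->
  k + l' <= q.+1 ->
  forall F : finFieldType, #|F| = q ->
  exists C : conv_code F t (k + l') k (k * t + l) (k * t), access_optimal C.
Proof.
move=> _ l0 l'0 k0 t0 _ hk tl hmin hkl F hF.
have lk : (l <= k)%N by move: hmin; rewrite leq_min => /andP [].
have ll' : (l <= l')%N by move: hmin; rewrite leq_min => /andP [].
have h1 : (k + l' <= #|F|.+1)%N by rewrite hF.
have h2 : (k * t + l <= #|F|.+1)%N.
  rewrite hF.
  have a : (k * t <= k * l)%N by rewrite leq_mul2l tl orbT.
  have b : (k.+1 <= q.+1 %/ l)%N by lia.
  have c : (k.+1 * l <= q.+1 %/ l * l)%N by rewrite leq_mul2r b orbT.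
  have d : (q.+1 %/ l * l <= q.+1)%N by apply: leq_trunc_div.
  move: a c d; rewrite mulSn; set x := (k * t)%N; set y := (q.+1 %/ l * l)%N.
  rewrite mulnC; lia.
pose d0 : 'I_t := Ordinal t0.
have dI0 : (0 < k + l')%N by lia.
have dF0 : (0 < k * t + l)%N by lia.
pose dI : 'I_(k + l') := Ordinal dI0.
pose dF : 'I_(k * t + l) := Ordinal dF0.
exists (@CC F k l l' t d0 dI dF); split; first exact: CC_MDS.
move=> C' HC'; rewrite CC_cost //; case: eqP => t1 //.
by apply: lower => //; lia.
Qed.
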